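(* Let $\sigma=\sigma_1\cdots\sigma_k\in\mathfrak S_k$ be a consecutive pattern ($k\ge1$). Let $12\text{-}\sigma$ denote the generalized pattern $12\text{-}(\sigma_1+2)\cdots(\sigma_k+2)$ and $21\text{-}\sigma$ the generalized pattern $21\text{-}(\sigma_1+2)\cdots(\sigma_k+2)$. Then $A_{12\text{-}\sigma}(z)=A_{21\text{-}\sigma}(z)$.
   Context: $\mathfrak S_n$ is the symmetric group on $\{1,\dots,n\}$, permutations in one-line notation. A generalized pattern of length $m$ is a permutation $\sigma_1\cdots\sigma_m\in\mathfrak S_m$ with, between each pair of adjacent entries, either a dash ''-'' or nothing. A permutation $\pi\in\mathfrak S_n$ contains it if there are indices $i_1<\dots<i_m$ with $i_{j+1}=i_j+1$ whenever there is no dash between $\sigma_j$ and $\sigma_{j+1}$, and with $\pi_{i_a}<\pi_{i_b}$ iff $\sigma_a<\sigma_b$ for all $a,b$; otherwise $\pi$ avoids it. A consecutive pattern has no dashes. $\alpha_n(\sigma)$ is the number of permutations in $\mathfrak S_n$ avoiding $\sigma$ ($\alpha_0=1$) and $A_\sigma(z)=\sum_{n\ge0}\alpha_n(\sigma)z^n/n!$. *)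

(* Defs.v *)
From mathcomp Require Import all_boot all_order all_algebra.
From mathcomp Require Import fingroup perm.
Set Implicit Arguments. Unset Strict Implicit. Unset Printing Implicit Defensive.
Import GRing.Theory Num.Theory.

(* A generalized pattern: its one-line notation [gp_seq] (a permutation of
   {1,..,m}, m = size gp_seq) and [gp_dash j] = true iff there is a dash
   between the entries at (0-based) positions j and j+1. *)
Record gpat := GPat { gp_seq : seq nat; gp_dash : nat -> bool }.

Definition gcontains (p : gpat) (n : nat) (pi : 'S_n) : bool :=
  [exists f : {ffun 'I_(size (gp_seq p)) -> 'I_n},
    [forall a : 'I_(size (gp_seq p)), forall b : 'I_(size (gp_seq p)),
      ((a < b)%N ==> (f a < f b)%N) &&
      (((val b == (val a).+1) && ~~ gp_dash p a) ==> (val (f b) == (val (f a)).+1)) &&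
      ((pi (f a) < pi (f b))%N == (nth 0 (gp_seq p) a < nth 0 (gp_seq p) b)%N)]].

Definition alpha (p : gpat) (n : nat) : nat :=
  #|[set pi : 'S_n | ~~ gcontains p pi]|.

(* The exponential generating function A_p(z) = sum alpha_n z^n / n!,
   as a formal power series given by its coefficient sequence. *)
Definition egf (p : gpat) : nat -> rat :=
  fun n => ((alpha p n)%:R / (n`!)%:R)%R.

Definition oneline (k : nat) (s : 'S_k) : seq nat :=
  [seq (val (s j)).+1 | j <- enum 'I_k].

(* 12-sigma = 12-(s_1+2)...(s_k+2) and 21-sigma: dash only after position 1 *)
Definition pat12 (k : nat) (s : 'S_k) : gpat :=
  GPat ([:: 1; 2] ++ [seq x + 2 | x <- oneline s]) (fun j => j == 1).
Definition pat21 (k : nat) (s : 'S_k) : gpat :=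
  GPat ([:: 2; 1] ++ [seq x + 2 | x <- oneline s]) (fun j => j == 1).

(* Main.v *)
Require Import Defs.
From mathcomp Require Import all_boot all_order all_algebra.
From mathcomp Require Import fingroup perm.
From mathcomp Require Import zify.
From Stdlib Require Import FunctionalExtensionality.
Set Implicit Arguments. Unset Strict Implicit. Unset Printing Implicit Defensive.

Section Runs.
Variable S : nat -> bool.
Variable n : nat.
Hypothesis HS : forall p, S p -> p < n.

Fixpoint rs p := if p is q.+1 then (if S q then rs q else p) else 0.
Fixpoint re f p := if f is f'.+1 then (if S p.+1 then re f' p.+1 else p) else p.
Definition rho p := if S p then rs p + re n p - p else p.

Lemma rs_spec p : rs p <= p /\ (forall q, rs p <= q < p -> S q) /\ (0 < rs p -> ~~ S (rs p).-1).
Proof.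
elim: p => [|p [IH1 [IH2 IH3]]] /=; first by split=> //; split=> // q; lia.
case: ifP => Sp.
- split; first lia. split=> // q Hq. case: (ltnP q p) => Hqp; first (apply: IH2; lia).
  have ->: q = p by lia. done.
- split=> //; split=> [q|]; first lia. by rewrite /= Sp.
Qed.

Lemma re_spec f p : p <= re f p /\ (forall q, p < q <= re f p -> S q) /\ (re f p < p + f -> ~~ S (re f p).+1).
Proof.
elim: f p => [|f IH] p /=.
- split=> //; split=> [q|]; [lia | by rewrite addn0 ltnn].
- case: ifP => Sp1.
  + have [H1 [H2 H3]] := IH p.+1. split; first lia. split.
    * move=> q Hq. case: (ltnP p.+1 q) => Hq'; first (apply: H2; lia).
      have ->: q = p.+1 by lia. done.
    * move=> Hlt; apply: H3; lia.
  + split=> //; split=> [q|_]; [lia| by rewrite Sp1].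
Qed.

Lemma re_bound p : ~~ S (re n p).+1.
Proof.
have [_ [_ H3]] := re_spec n p.
case: (ltnP (re n p) (p + n)) => H; first exact: H3.
apply/negP => /HS; lia.
Qed.

Lemma rs_uniq p a : a <= p -> (forall q, a <= q < p -> S q) -> (0 < a -> ~~ S a.-1) -> rs p = a.
Proof.
have [H1 [H2 H3]] := rs_spec p => Ha Hr Hb.
case: (ltngtP (rs p) a) => // Hlt.
- have := Hb (leq_ltn_trans (leq0n _) Hlt). by rewrite H2 //; lia.
- have := H3 (leq_ltn_trans (leq0n _) Hlt). by rewrite Hr //; lia.
Qed.

Lemma re_uniq p b : p <= b -> (forall q, p < q <= b -> S q) -> ~~ S b.+1 -> re n p = b.
Proof.
have [H1 [H2 _]] := re_spec n p; have H3 := re_bound p => Hb Hr Hn.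
case: (ltngtP (re n p) b) => // Hlt.
- by move: H3; rewrite Hr //; lia.
- by move: Hn; rewrite H2 //; lia.
Qed.

Lemma run_S p q : S p -> rs p <= q <= re n p -> S q.
Proof.
move=> Sp Hq. have [H1 [H2 _]] := rs_spec p. have [H4 [H5 _]] := re_spec n p.
case: (ltngtP q p) => Hqp; [apply: H2 | apply: H5 | by rewrite Hqp]; lia.
Qed.

Lemma run_in p q : S p -> rs p <= q <= re n p -> rs q = rs p /\ re n q = re n p.
Proof.
move=> Sp Hq. have [H1 [H2 H3]] := rs_spec p. have [H4 [H5 _]] := re_spec n p.
split.
- apply: rs_uniq => //; first lia. move=> r Hr; apply: (run_S Sp); lia.
- apply: re_uniq; first lia; last exact: re_bound. move=> r Hr; apply: (run_S Sp); lia.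
Qed.

Lemma rho_run p : S p -> rs p <= rho p <= re n p.
Proof.
move=> Sp. have [H1 _] := rs_spec p. have [H4 _] := re_spec n p.
rewrite /rho Sp. lia.
Qed.

Lemma rho_S p : S (rho p) = S p.
Proof.
case Sp: (S p); last by rewrite /rho Sp.
exact: (run_S Sp (rho_run Sp)).
Qed.

Lemma rho_invol p : rho (rho p) = p.
Proof.
case Sp: (S p); last by rewrite /rho !Sp.
have Hr := rho_run Sp. have [E1 E2] := run_in Sp Hr.
have Sr : S (rho p) by rewrite rho_S.
have [H1 _] := rs_spec p. have [H4 _] := re_spec n p.
rewrite {1}/rho Sr E1 E2 /rho Sp. lia.
Qed.

Lemma rho_nS p : ~~ S p -> rho p = p.
Proof. by rewrite /rho => /negbTE ->. Qed.

Lemma rho_lt p : p < n -> rho p < n.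
Proof.
move=> Hp. case Sp: (S p); last by rewrite /rho Sp.
have Hr := rho_run Sp. have [H4 _] := re_spec n p.
have : S (re n p) by apply: (run_S Sp); have [H1 _] := rs_spec p; lia.
move/HS; lia.
Qed.

Lemma rho_adj i : S i -> S i.+1 -> rho i = (rho i.+1).+1.
Proof.
move=> Si Si1.
have [H1 _] := rs_spec i. have [H4 [_ H6]] := re_spec n i.
have Hre : i < re n i.
  case: (ltngtP i (re n i)) => // E; [lia|]. by move: (re_bound i); rewrite -E Si1.
have Hin : rs i <= i.+1 <= re n i by lia.
have [E1 E2] := run_in Si Hin.
rewrite /rho Si Si1 E1 E2; lia.
Qed.
End Runs.

Lemma rs_ext S1 S2 : S1 =1 S2 -> rs S1 =1 rs S2.
Proof. move=> E; elim=> //= p ->; by rewrite E. Qed.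

Lemma re_ext S1 S2 f : S1 =1 S2 -> re S1 f =1 re S2 f.
Proof. move=> E; elim: f => //= f IH p; by rewrite E IH. Qed.

Lemma rho_ext S1 S2 n : S1 =1 S2 -> rho S1 n =1 rho S2 n.
Proof. move=> E p; by rewrite /rho E (rs_ext E) (re_ext _ E). Qed.
Section Main.
Variables (n k : nat) (s : nat -> nat) (l0 : nat).
Hypothesis Hl0 : l0 < k.
Hypothesis Hmin : forall l, l < k -> l != l0 -> s l0 < s l.

Definition blockb (g : nat -> nat) j := (j + k <= n) &&
  all (fun l => all (fun l' => (g (j+l) < g (j+l')) == (s l < s l')) (iota 0 k)) (iota 0 k).
Definition smallb g p := has (fun j => (p < j) && blockb g j && (g p < g (j + l0))) (iota 0 n.+1).

Lemma blockP g j : reflect (j + k <= n /\ forall l l', l < k -> l' < k -> (g (j+l) < g (j+l')) = (s l < s l')) (blockb g j).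
Proof.
apply: (iffP andP) => [[H1 /allP H2]|[H1 H2]]; split=> //.
- move=> l l' Hl Hl'. have /allP/(_ l') := H2 l ltac:(by rewrite mem_iota).
  by move/(_ ltac:(by rewrite mem_iota))/eqP.
- apply/allP => l; rewrite mem_iota => /andP[_ Hl]; apply/allP => l'; rewrite mem_iota => /andP[_ Hl'].
  by rewrite H2.
Qed.

Lemma block_min g j l : blockb g j -> l < k -> g (j + l0) <= g (j + l).
Proof.
move=> /blockP [_ H] Hl. case: (eqVneq l l0) => [->//|Hne].
by apply: ltnW; rewrite H // Hmin.
Qed.

Lemma smallP g p : reflect (exists j, [/\ p < j, blockb g j & g p < g (j + l0)]) (smallb g p).
Proof.
apply: (iffP hasP) => [[j _ /andP[/andP[H1 H2] H3]]|[j [H1 H2 H3]]]; first by exists j.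
exists j; last by rewrite H1 H2 H3.
move/blockP: H2 => [H2 _]. rewrite mem_iota. lia.
Qed.

Lemma small_lt g p : smallb g p -> p < n.
Proof. move/smallP => [j [H1 /blockP [H2 _] _]]. lia. Qed.

Lemma block_ext g g' j : blockb g j -> (forall l, l < k -> g' (j + l) = g (j + l)) -> blockb g' j.
Proof.
move=> /blockP [H1 H2] E. apply/blockP; split=> // l l' Hl Hl'. by rewrite !E // H2.
Qed.

Lemma best g (Hg : forall p, p < n -> g p < n) q j : q < j -> blockb g j -> g q < g (j + l0) ->
  exists j', [/\ q < j', blockb g j', g q < g (j' + l0) & forall l, l < k -> ~~ smallb g (j' + l)].
Proof.
move: {2}(n - g (j + l0)) (leqnn (n - g (j + l0))) => d.
elim: d j => [|d IH] j Hd Hq Hb Hlt;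
 (case: (boolP (has (fun l => smallb g (j+l)) (iota 0 k))) => [/hasP [l]|/hasPn Hn];
  [rewrite mem_iota => /andP[_ Hl] /smallP [j' [H1 H2 H3]]
  | exists j; split=> // l Hl; apply: Hn; by rewrite mem_iota]).
- have := block_min Hb Hl. have /blockP [Hj _] := Hb. have := Hg (j + l0). lia.
- have := block_min Hb Hl. have /blockP [Hj _] := H2. have := Hg (j' + l0).
  move=> Hgn Hm.
  apply: (IH j') => //; [|lia|lia]. have := Hgn ltac:(lia). lia.
Qed.

Section Rho.
Variable g : nat -> nat.
Hypothesis Hg : forall p, p < n -> g p < n.
Definition r := rho (smallb g) n.
Definition g' := fun p => g (r p).

Lemma HS : forall p, smallb g p -> p < n.
Proof. exact: small_lt. Qed.

Lemma Hg' p : p < n -> g' p < n.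
Proof. move=> Hp; apply: Hg; exact: (rho_lt HS). Qed.

Lemma small_sub p : smallb g p -> smallb g' p.
Proof.
move=> Sp. have Sr : smallb g (r p) by rewrite /r rho_S.
have [j [Hj Hb Hlt]] := smallP _ _ Sr. have [j' [Hq Hb' Hlt' Hns]] := best Hg Hj Hb Hlt.
have Hfix : forall l, l < k -> g' (j'+l) = g (j'+l).
  by move=> l Hl; rewrite /g' /r rho_nS // Hns.
apply/smallP; exists j'; split.
- rewrite ltnNge; apply/negP => Hle.
  have Hrun := rho_run n Sp.
  have [H1 _] := rs_spec (smallb g) p. have [H4 _] := re_spec (smallb g) n p.
  have : smallb g j'. apply: (run_S (n:=n) Sp). rewrite /r in Hq. lia.
  by have := Hns 0 (leq_ltn_trans (leq0n _) Hl0); rewrite addn0 => /negbTE ->.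
- by apply: block_ext Hb' _.
- by rewrite Hfix.
Qed.

Lemma small_eq p : smallb g' p = smallb g p.
Proof.
apply/idP/idP; last exact: small_sub.
case Sp: (smallb g p) => // H.
have E : g' p = g p by rewrite /g' /r rho_nS // Sp.
have [j [Hj Hb Hlt]] := smallP _ _ H. have [j' [Hq Hb' Hlt' Hns]] := best Hg' Hj Hb Hlt.
have Hfix : forall l, l < k -> g (j'+l) = g' (j'+l).
  move=> l Hl; rewrite /g' /r rho_nS //. apply/negP => /small_sub. by move/negP: (Hns l Hl).
rewrite -Sp; apply/smallP; exists j'; split => //.
- by apply: block_ext Hb' _.
- by rewrite -E Hfix.
Qed.
End Rho.

Definition c12 g := exists i j, [/\ i.+2 <= j, blockb g j, g i < g i.+1 & g i.+1 < g (j + l0)].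
Definition c21 g := exists i j, [/\ i.+2 <= j, blockb g j, g i.+1 < g i & g i < g (j + l0)].

Lemma c12_iff g : c12 g <-> exists i, [/\ smallb g i, smallb g i.+1 & g i < g i.+1].
Proof.
split.
- move=> [i [j [H1 H2 H3 H4]]]; exists i; split=> //; apply/smallP; exists j; split=> //; lia.
- move=> [i [_ /smallP [j [H1 H2 H3]] H4]]. exists i, j; split=> //.
Qed.

Lemma c21_iff g : c21 g <-> exists i, [/\ smallb g i, smallb g i.+1 & g i.+1 < g i].
Proof.
split.
- move=> [i [j [H1 H2 H3 H4]]]; exists i; split=> //; apply/smallP; exists j; split=> //; lia.
- move=> [i [/smallP [j [H1 H2 H3]] _ H4]]. exists i, j; split=> //.
  rewrite ltnNge; apply/negP => Hle. have Ej : j = i.+1 by lia.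
  have := block_min H2 (leq_ltn_trans (leq0n _) Hl0). rewrite addn0 Ej. rewrite Ej in H3. lia.
Qed.

Lemma c12_c21 g (Hg : forall p, p < n -> g p < n) : c12 g <-> c21 (g' g).
Proof.
rewrite c12_iff c21_iff. have HSg := HS (g:=g).
have SE := small_eq Hg.
split.
- move=> [i [Si Si1 Ha]]. exists (r g i.+1).
  have Ei : r g i = (r g i.+1).+1 by exact: (rho_adj HSg Si Si1).
  have E2 : (r g i.+1).+1 = r g i by rewrite Ei.
  rewrite !SE E2 /r !rho_S Si Si1; split=> //.
  rewrite /g' -/(r g) /r !(rho_invol HSg). exact: Ha.
- move=> [i [Si Si1 Ha]]. rewrite !SE in Si Si1. exists (r g i.+1).
  have Ei : r g i = (r g i.+1).+1 by exact: (rho_adj HSg Si Si1).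
  have E2 : (r g i.+1).+1 = r g i by rewrite Ei.
  rewrite E2 /r !rho_S Si Si1; split=> //.
Qed.
End Main.
Definition gp n (pi : 'S_n) (p : nat) : nat := nth 0 [seq nat_of_ord (pi x) | x <- enum 'I_n] p.

Lemma gpE n (pi : 'S_n) (x : 'I_n) : gp pi x = pi x.
Proof. by rewrite /gp (nth_map x) ?size_enum_ord ?ltn_ord // nth_ord_enum. Qed.

Lemma gp_big n (pi : 'S_n) p : n <= p -> gp pi p = 0.
Proof. move=> H; rewrite /gp nth_default // size_map size_enum_ord //. Qed.

Lemma gp_lt n (pi : 'S_n) p : p < n -> gp pi p < n.
Proof. move=> H. have := gpE pi (Ordinal H) => /= ->. exact: ltn_ord. Qed.

Section Char.
Variables (n K : nat) (s : nat -> nat) (u0 u1 : nat) (p : gpat).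
Local Notation k := K.+1.
Hypothesis Hsz : size (gp_seq p) = K.+3.
Hypothesis Hd : forall j, gp_dash p j = (j == 1).
Definition Hf x := match x with 0 => u0 | 1 => u1 | l.+2 => (s l).+3 end.
Hypothesis Hnth : forall x, x < K.+3 -> nth 0 (gp_seq p) x = Hf x.
Hypothesis Hu0 : u0 <= 2.
Hypothesis Hu1 : u1 <= 2.
Variable pi : 'S_n.

Definition charP := exists i j, [/\ i.+2 <= j, j + k <= n,
   (forall l l', l < k -> l' < k -> (gp pi (j+l) < gp pi (j+l')) = (s l < s l')),
   (gp pi i < gp pi i.+1) = (u0 < u1) /\ (gp pi i.+1 < gp pi i) = (u1 < u0) &
   (forall l, l < k -> gp pi i < gp pi (j+l) /\ gp pi i.+1 < gp pi (j+l))].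

Lemma char_fwd : gcontains p pi -> charP.
Proof.
move=> /existsP [f /forallP Hfa].
have a0 : 'I_(size (gp_seq p)) by rewrite Hsz; exact: ord0.
pose A x := insubd a0 x.
have vA x : x < K.+3 -> (A x : nat) = x.
  by move=> Hx; rewrite /A val_insubd (_ : x < size (gp_seq p)) // Hsz.
pose F x := nat_of_ord (f (A x)).
have HF x y : x < K.+3 -> y < K.+3 ->
  [/\ x < y -> F x < F y, y = x.+1 -> x != 1 -> F y = (F x).+1 &
      (gp pi (F x) < gp pi (F y)) = (Hf x < Hf y)].
  move=> Hx Hy. have /forallP/(_ (A y)) := Hfa (A x).
  have vA' z : z < K.+3 -> \val (A z) = z by exact: vA.
  rewrite -!gpE ?vA' ?vA // Hd !Hnth //.
  move=> /andP[/andP[/implyP H1 /implyP H2] /eqP H3]. split=> //.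
  move=> Exy Hx1; apply/eqP; apply: H2. by rewrite Exy eqxx Hx1.
have Fst l : l < k -> F l.+2 = F 2 + l.
  elim: l => [|l IH] Hl; first by rewrite addn0.
  rewrite addnS -IH; last lia. have [_ H2 _] := HF l.+2 l.+3 ltac:(lia) ltac:(lia).
  exact: H2.
have F1 : F 1 = (F 0).+1 by have [_ H2 _] := HF 0 1 isT isT; exact: H2.
exists (F 0), (F 2); split; [| | |split|].
- have [H _ _] := HF 1 2 isT isT. have := H isT. lia.
- have := ltn_ord (f (A K.+2)). rewrite -/(F K.+2) Fst //. lia.
- move=> l l' Hl Hl'. have [_ _ H] := HF l.+2 l'.+2 ltac:(lia) ltac:(lia).
  by rewrite (Fst l) // (Fst l') // in H; rewrite H /= ltnS ltnS ltnS.
- have [_ _ H] := HF 0 1 isT isT. by rewrite F1 in H.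
- have [_ _ H] := HF 1 0 isT isT. by rewrite F1 in H.
- move=> l Hl. have [_ _ H] := HF 0 l.+2 isT ltac:(lia).
  have [_ _ H'] := HF 1 l.+2 isT ltac:(lia).
  rewrite (Fst l) // in H H'. rewrite F1 in H'. rewrite H H' /=. split; lia.
Qed.

Lemma char_bwd : charP -> gcontains p pi.
Proof.
move=> [i [j [Hij Hjn Hb [H01 H10] Hlt]]].
have Hn : 0 < n by lia.
pose x0 : 'I_n := Ordinal Hn.
pose F x := match x with 0 => i | 1 => i.+1 | l.+2 => j + l end.
have HFn x : x < K.+3 -> F x < n by case: x => [|[|x]] /=; lia.
have vf z : z < K.+3 -> nat_of_ord (insubd x0 (F z)) = F z.
  by move=> Hz; rewrite val_insubd HFn.
have vf' z : z < K.+3 -> \val (insubd x0 (F z)) = F z by exact: vf.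
apply/existsP; exists [ffun a : 'I_(size (gp_seq p)) => insubd x0 (F a)].
apply/forallP => a; apply/forallP => b. rewrite !ffunE.
have Ha : a < K.+3 by rewrite -Hsz ltn_ord.
have Hb' : b < K.+3 by rewrite -Hsz ltn_ord.
rewrite -!gpE !vf // !vf' // Hd !Hnth //.
case: a Ha => a Ha' /= Ha; case: b Hb' => b Hb'' /= Hb'.
case: a Ha Ha' => [|[|a]] Ha Ha'; case: b Hb' Hb'' => [|[|b]] Hb' Hb'';
  (apply/andP; split; [apply/andP; split; apply/implyP => /= ?; lia | apply/eqP => /=]).
- by rewrite !ltnn.
- exact: H01.
- have [h1 h2] := Hlt b ltac:(lia). by apply/idP/idP => _; lia.
- exact: H10.
- by rewrite !ltnn.
- have [h1 h2] := Hlt b ltac:(lia). by apply/idP/idP => _; lia.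
- have [h1 h2] := Hlt a ltac:(lia). by apply/idP/idP => H; lia.
- have [h1 h2] := Hlt a ltac:(lia). by apply/idP/idP => H; lia.
- rewrite Hb; [|lia|lia]. by rewrite !ltnS.
Qed.
End Char.
Section Final.
Variables (K : nat) (sigma : 'S_K.+1).
Local Notation k := K.+1.
Definition sf (l : nat) : nat := sigma (inord l).
Definition l0f : nat := (sigma^-1)%g ord0.

Lemma Hl0f : l0f < k.
Proof. exact: ltn_ord. Qed.

Lemma Hminf l : l < k -> l != l0f -> sf l0f < sf l.
Proof.
move=> Hl Hne.
have -> : sf l0f = 0 by rewrite /sf /l0f inord_val permKV.
rewrite lt0n; apply/negP => /eqP E.
have E2 : sigma (inord l) = ord0 by apply: val_inj.
move/negP: Hne; apply. apply/eqP.
have := congr1 (fun x => nat_of_ord ((sigma^-1)%g x)) E2. rewrite permK inordK //.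
Qed.

Lemma nth_pat l : l < k -> nth 0 [seq x + 2 | x <- oneline sigma] l = (sf l).+3.
Proof.
move=> Hl. rewrite /oneline (nth_map 0) ?size_map ?size_enum_ord //.
rewrite (nth_map ord0) ?size_enum_ord //.
have -> : nth ord0 (enum 'I_k) l = inord l.
  by apply: val_inj; rewrite /= nth_enum_ord // inordK.
- by rewrite addn2.
- have := size_enum_ord k. rewrite enumT => ->. exact: Hl.
Qed.

Lemma size_pat : size [seq x + 2 | x <- oneline sigma] = k.
Proof. rewrite /oneline !size_map. first [by rewrite size_enum_ord | by rewrite -enumT size_enum_ord | by have := size_enum_ord k; rewrite enumT]. Qed.

Section Perm.
Variable n : nat.

Definition cc12 (g : nat -> nat) := c12 n k sf l0f g.
Definition cc21 (g : nat -> nat) := c21 n k sf l0f g.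

Lemma c12_gc (pi : 'S_n) : gcontains (pat12 sigma) pi <-> cc12 (gp pi).
Proof.
have HC := @char_fwd n K sf 1 2 (pat12 sigma).
have HB := @char_bwd n K sf 1 2 (pat12 sigma).
have Hsz : size (gp_seq (pat12 sigma)) = K.+3 by rewrite /= size_pat.
have Hd : forall j, gp_dash (pat12 sigma) j = (j == 1) by [].
have Hnth : forall x, x < K.+3 -> nth 0 (gp_seq (pat12 sigma)) x = Hf sf 1 2 x.
  by case=> [|[|x]] //= Hx; rewrite nth_pat.
split.
- move/(HC Hsz Hd Hnth isT isT) => [i [j [Hij Hjn Hb [H01 H10] Hlt]]].
  exists i, j; split=> //; first by apply/blockP.
  by have [h1 h2] := Hlt l0f Hl0f.
- move=> [i [j [Hij /blockP [Hjn Hb] H01 Hlt]]].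
  apply: (HB Hsz Hd Hnth isT isT); exists i, j; split=> //.
  + split; [by rewrite H01 | by rewrite ltnNge ltnW].
  + move=> l Hl. have := @block_min n k sf l0f Hl0f Hminf (gp pi) j l ltac:(by apply/blockP) Hl.
    lia.
Qed.

Lemma c21_gc (pi : 'S_n) : gcontains (pat21 sigma) pi <-> cc21 (gp pi).
Proof.
have HC := @char_fwd n K sf 2 1 (pat21 sigma).
have HB := @char_bwd n K sf 2 1 (pat21 sigma).
have Hsz : size (gp_seq (pat21 sigma)) = K.+3 by rewrite /= size_pat.
have Hd : forall j, gp_dash (pat21 sigma) j = (j == 1) by [].
have Hnth : forall x, x < K.+3 -> nth 0 (gp_seq (pat21 sigma)) x = Hf sf 2 1 x.
  by case=> [|[|x]] //= Hx; rewrite nth_pat.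
split.
- move/(HC Hsz Hd Hnth isT isT) => [i [j [Hij Hjn Hb [H01 H10] Hlt]]].
  exists i, j; split=> //; first by apply/blockP.
  by have [h1 h2] := Hlt l0f Hl0f.
- move=> [i [j [Hij /blockP [Hjn Hb] H01 Hlt]]].
  apply: (HB Hsz Hd Hnth isT isT); exists i, j; split=> //.
  + split; [by rewrite ltnNge ltnW | by rewrite H01].
  + move=> l Hl. have := @block_min n k sf l0f Hl0f Hminf (gp pi) j l ltac:(by apply/blockP) Hl.
    lia.
Qed.

Definition rr (pi : 'S_n) := r n k sf l0f (gp pi).

Lemma HSpi (pi : 'S_n) p : smallb n k sf l0f (gp pi) p -> p < n.
Proof. exact: (HS Hl0f). Qed.

Lemma rr_lt (pi : 'S_n) (x : 'I_n) : rr pi x < n.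
Proof. exact: (rho_lt (HSpi (pi:=pi))). Qed.

Definition rfun (pi : 'S_n) (x : 'I_n) : 'I_n := Ordinal (rr_lt pi x).

Lemma rfun_inj pi : injective (rfun pi).
Proof.
move=> x y /(congr1 val) /= E. apply: val_inj => /=.
have := congr1 (rho (smallb n k sf l0f (gp pi)) n) E.
by rewrite /rr /r !(rho_invol (HSpi (pi:=pi))).
Qed.

Definition rp (pi : 'S_n) : 'S_n := perm (@rfun_inj pi).
Definition phi (pi : 'S_n) : 'S_n := (rp pi * pi)%g.

Lemma gp_phi pi : gp (phi pi) = g' n k sf l0f (gp pi).
Proof.
apply: functional_extensionality => p. rewrite /g'.
case: (ltnP p n) => Hp.
- have -> : p = Ordinal Hp by [].
  by rewrite !gpE permM permE /= -gpE.
- rewrite /r rho_nS; last by apply/negP => /HSpi; lia.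
  by rewrite !gp_big.
Qed.

Lemma Hgp (pi : 'S_n) p : p < n -> gp pi p < n.
Proof. exact: gp_lt. Qed.

Lemma key pi : gcontains (pat12 sigma) pi = gcontains (pat21 sigma) (phi pi).
Proof.
apply/idP/idP => H.
- apply/c21_gc. rewrite /cc21 gp_phi. apply/(c12_c21 Hl0f Hminf (@Hgp pi)). exact/c12_gc.
- apply/c12_gc. apply/(c12_c21 Hl0f Hminf (@Hgp pi)). rewrite -gp_phi. exact/c21_gc.
Qed.

Lemma rp_phi pi : rp (phi pi) = rp pi.
Proof.
apply/permP => x; rewrite !permE; apply: val_inj => /=.
rewrite /rr gp_phi /r. apply: rho_ext => q. exact: (small_eq Hl0f Hminf (@Hgp pi)).
Qed.

Lemma phiK : involutive phi.
Proof.
move=> pi. rewrite /phi rp_phi mulgA.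
have -> : (rp pi * rp pi)%g = 1%g.
  apply/permP => x; rewrite permM !permE ?perm1; apply: val_inj => /=.
  exact: (rho_invol (HSpi (pi:=pi))).
by rewrite mul1g.
Qed.

Lemma alpha_eq : alpha (pat12 sigma) n = alpha (pat21 sigma) n.
Proof.
rewrite /alpha.
have -> : [set pi : 'S_n | ~~ gcontains (pat12 sigma) pi] = phi @^-1: [set pi : 'S_n | ~~ gcontains (pat21 sigma) pi].
  by apply/setP => pi; rewrite !inE key.
apply: card_preimset. exact: (inv_inj phiK).
Qed.
End Perm.
End Final.

Theorem mainTheorem8 (k : nat) (sigma : 'S_k) :
  (1 <= k)%N -> egf (pat12 sigma) = egf (pat21 sigma).
Proof.
case: k sigma => [//|K] sigma _.
apply: functional_extensionality => m. by rewrite /egf alpha_eq.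
Qed.
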